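(* Let $S$ be a SAT problem on $n$ variables with clauses represented by $z_1,\dots,z_m$, and for each $j$ let $\mathcal T'_j=\{\lambda\in O(1)^n : M(z_j)\subseteq(1,\lambda)\}$. Then $S$ is unsatisfiable if and only if $\bigcup_{j=1}^m\mathcal T'_j=O(1)^n$.
   Context: $\mathbb{R}^{n,n}$ has orthonormal basis $e_1,\dots,e_{2n}$ with $e_i\cdot e_j=\delta_{ij}(-1)^{i+1}$, identified with $\mathbb{R}^n\times\mathbb{R}^n$ via $\sum_i(x_ie_{2i-1}+y_ie_{2i})\mapsto(x,y)$. Witt basis: $p_i=\tfrac12(e_{2i-1}+e_{2i})$, $q_i=\tfrac12(e_{2i-1}-e_{2i})$. For $t\in O(n)$, $(1,t):=\{(x,t(x)):x\in\mathbb{R}^n\}$; in particular $P=(1,1)=\mathrm{span}\{p_1,\dots,p_n\}$ and $(1,\lambda)$ is the image of $P$ under the isometry $\mathrm{id}\times\lambda$. $O(1)^n$ is the group of diagonal $n\times n$ matrices with entries $\pm1$. SAT encoding in the Clifford algebra $Cl(\mathbb{R}^{n,n})$: $\rho_i\mapsto q_ip_i$, $\bar\rho_i\mapsto p_iq_i$; a clause $(\ell_{j_1}\lor\dots\lor\ell_{j_k})$ on distinct variables is represented by $z=\bar\ell_{j_1}\cdots\bar\ell_{j_k}$ (product of encodings of negated literals); $M(z)$ is the span of the first vectors of the factors of $z$ (e.g. $M(q_1p_1\,p_2q_2)=\mathrm{span}\{q_1,p_2\}$). *)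

(* Defs.v *)
From HB Require Import structures.
From mathcomp Require Import all_boot all_order all_algebra.
Set Implicit Arguments. Unset Strict Implicit. Unset Printing Implicit Defensive.
Import Order.TTheory GRing.Theory Num.Theory.
Local Open Scope ring_scope.

(* R^{n,n} identified with R^n x R^n; a vector (x,y) is the row vector
   row_mx x y : 'rV_(n+n).  e_{2i-1} |-> (delta_i, 0), e_{2i} |-> (0, delta_i). *)
Definition ex (R : fieldType) (n : nat) (i : 'I_n) : 'rV[R]_(n + n) :=
  row_mx (delta_mx 0 i) 0.
Definition ey (R : fieldType) (n : nat) (i : 'I_n) : 'rV[R]_(n + n) :=
  row_mx 0 (delta_mx 0 i).

Definition wp (R : fieldType) (n : nat) (i : 'I_n) : 'rV[R]_(n + n) :=
  2^-1 *: (ex R i + ey R i).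
Definition wq (R : fieldType) (n : nat) (i : 'I_n) : 'rV[R]_(n + n) :=
  2^-1 *: (ex R i - ey R i).

(* literal on variable i: (i, true) = rho_i, (i, false) = bar rho_i *)
Definition literal (n : nat) := ('I_n * bool)%type.
Definition negl (n : nat) (l : literal n) : literal n := (l.1, ~~ l.2).

(* A Clifford factor q_i p_i (resp. p_i q_i) is recorded as the ordered pair
   of its two vector factors (first, second). *)
Definition enc_lit (R : fieldType) (n : nat) (l : literal n)
  : 'rV[R]_(n + n) * 'rV[R]_(n + n) :=
  if l.2 then (wq R l.1, wp R l.1) else (wp R l.1, wq R l.1).

(* z = product of encodings of the negated literals, as the formal word of
   its factors (in order). *)
Definition clause_word (R : fieldType) (n : nat) (c : seq (literal n))
  : seq ('rV[R]_(n + n) * 'rV[R]_(n + n)) :=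
  map (fun l => enc_lit R (negl l)) c.

(* the matrix whose rows are the elements of s (row space = span of s) *)
Definition span_seq (R : fieldType) (N : nat) (s : seq 'rV[R]_N)
  : 'M[R]_(size s, N) := \matrix_(k < size s, j < N) (s`_k) 0 j.

Definition Mspace (R : fieldType) (n : nat)
  (z : seq ('rV[R]_(n + n) * 'rV[R]_(n + n))) :=
  span_seq (map fst z).

(* (1,t) = {(x, t x)}; with row vectors x |-> x *m t^T *)
Definition graph_sp (R : fieldType) (n : nat) (t : 'M[R]_n) : 'M[R]_(n, n + n) :=
  row_mx 1%:M t^T.

Definition O1n (R : fieldType) (n : nat) (l : 'M[R]_n) : Prop :=
  is_diag_mx l /\ forall i, l i i = 1 \/ l i i = -1.

Definition Tprime (R : fieldType) (n : nat) (c : seq (literal n)) (l : 'M[R]_n)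
  : Prop := O1n l /\ (Mspace (clause_word R c) <= graph_sp l)%MS.

Definition satisfiable (n m : nat) (cls : 'I_m -> seq (literal n)) : Prop :=
  exists a : 'I_n -> bool, forall j, has (fun l : literal n => a l.1 == l.2) (cls j).

(* Main.v *)
Require Import Defs.
From HB Require Import structures.
From mathcomp Require Import all_boot all_order all_algebra.
Import Order.TTheory GRing.Theory Num.Theory.
Local Open Scope ring_scope.

Section Aux.
Variables (R : realFieldType) (n : nat).

Lemma graph_in (l : 'M[R]_n) (x y : 'rV[R]_n) :
  (row_mx x y <= graph_sp l)%MS = (y == x *m l^T).
Proof.
rewrite /graph_sp; apply/submxP/eqP.
- case=> D; rewrite mul_mx_row mulmx1 => /eq_row_mx [-> ->] //.
- move=> ->; exists x; by rewrite mul_mx_row mulmx1.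
Qed.

Lemma diag_row (l : 'M[R]_n) (c : R) (i : 'I_n) : is_diag_mx l ->
  (c *: delta_mx 0 i) *m l^T = (c * l i i) *: (delta_mx 0 i : 'rV[R]_n).
Proof.
move=> /is_diag_mxP Hd; rewrite -scalemxAl -rowE -scalerA; congr (_ *: _).
apply/rowP => j; rewrite !mxE eqxx /=.
case: (eqVneq j i) => [->|ne]; first by rewrite mulr1.
by rewrite mulr0 Hd //.
Qed.

Lemma sdelta_inj (c d : R) (i : 'I_n) :
  c *: (delta_mx 0 i : 'rV[R]_n) = d *: delta_mx 0 i -> c = d.
Proof.
move=> /rowP /(_ i); rewrite !mxE !eqxx /= !mulr1 //.
Qed.

Lemma wp_in (l : 'M[R]_n) i : is_diag_mx l ->
  (wp R i <= graph_sp l)%MS <-> l i i = 1.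
Proof.
move=> Hd; rewrite /wp /ex /ey add_row_mx add0r addr0 scale_row_mx graph_in diag_row //.
split; [move/eqP/sdelta_inj => H | move=> ->; by rewrite mulr1].
have h2 : (2^-1 : R) != 0 by rewrite invr_eq0 pnatr_eq0.
by apply: (mulfI h2); rewrite mulr1.
Qed.

Lemma wq_in (l : 'M[R]_n) i : is_diag_mx l ->
  (wq R i <= graph_sp l)%MS <-> l i i = -1.
Proof.
move=> Hd; rewrite /wq /ex /ey opp_row_mx add_row_mx oppr0 add0r addr0
  scale_row_mx graph_in diag_row // -scaleN1r scalerA.
split; [move/eqP/sdelta_inj => H | move=> ->].
- have h2 : (2^-1 : R) != 0 by rewrite invr_eq0 pnatr_eq0.
  by apply: (mulfI h2); rewrite -H mulrC.
- exact: eqxx.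
Qed.

Definition cond (l : 'M[R]_n) (x : literal n) : bool :=
  l x.1 x.1 == (if x.2 then 1 else -1).

Lemma Mspace_in (l : 'M[R]_n) (c : seq (literal n)) : is_diag_mx l ->
  (Mspace (clause_word R c) <= graph_sp l)%MS <-> all (cond l) c.
Proof.
move=> Hd.
have Hlit : forall x : literal n,
    (fst (enc_lit R (negl x)) <= graph_sp l)%MS <-> cond l x.
  move=> [i b]; rewrite /cond /enc_lit /negl /=.
  case: b => /=; [apply: (iff_trans (wp_in l i Hd)) | apply: (iff_trans (wq_in l i Hd))];
    by split => /eqP.
rewrite /Mspace /clause_word -map_comp.
set s := map _ c.
have -> : all (cond l) c = all (fun v => (v <= graph_sp l)%MS) s.
  rewrite /s all_map; apply: eq_all => x /=.
  by apply/idP/idP => H; apply/Hlit.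
split.
- move/row_subP => H; apply/(all_nthP 0) => k Hk.
  have := H (Ordinal Hk).
  suff -> : row (Ordinal Hk) (span_seq s) = s`_k by [].
  by apply/rowP => j; rewrite !mxE.
- move/(all_nthP 0) => H; apply/row_subP => k.
  suff -> : row k (span_seq s) = s`_k by apply: H.
  by apply/rowP => j; rewrite !mxE.
Qed.

End Aux.

Theorem proposition5 (R : realFieldType) (n m : nat)
  (cls : 'I_m -> seq (literal n))
  (Hdistinct : forall j, uniq (map fst (cls j))) :
  ~ satisfiable cls <->
  (forall l : 'M[R]_n, (exists j : 'I_m, @Tprime R n (cls j) l) <-> O1n l).
Proof.
have n1 : (1 : R) != -1.
  by rewrite -subr_eq0 opprK (pnatr_eq0 R 2).
split.
- move=> Hns l; split; first by case=> j [].
  move=> [Hd Hpm].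
  case: (boolP [exists j, all (@cond R n l) (cls j)]) => [/existsP [j Hj] | Hno].
    by exists j; split => //; apply/Mspace_in.
  exfalso; apply: Hns.
  exists (fun i => l i i == -1) => j.
  have : ~~ all (@cond R n l) (cls j) by move/existsPn: Hno; apply.
  rewrite -has_predC => /hasP [x Hx Hc]; apply/hasP; exists x => //.
  have n2 : ((-1 : R) == 1) = false by rewrite eq_sym (negbTE n1).
  move: Hc; rewrite /cond /=; case: (Hpm x.1) => ->; case: x.2;
    rewrite /= ?eqxx ?(negbTE n1) ?n2 //.
- move=> H [a Ha].
  pose l : 'M[R]_n := diag_mx (\row_i (if a i then -1 else 1)).
  have Hl : O1n l.
    split; first exact: diag_mx_is_diag.
    by move=> i; rewrite !mxE eqxx /= mulr1n; case: (a i); [right|left].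
  have [j [_ Ht]] := (proj2 (H l)) Hl.
  have := (proj1 (@Mspace_in R n l (cls j) (diag_mx_is_diag _))) Ht.
  move/allP => Hall; move: (Ha j) => /hasP [x Hx /eqP Hax].
  move: (Hall x Hx); rewrite /cond /l !mxE eqxx /= mulr1n Hax.
  have n2 : ((-1 : R) == 1) = false by rewrite eq_sym (negbTE n1).
  by case: x.2; rewrite /= ?eqxx ?(negbTE n1) ?n2.
Qed.
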